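(* Let $q$ be a prime power, $m\ge 1$, and let $\mathcal{C}\subseteq\mathbb{F}_{q^m}^n$ be an $\mathbb{F}_{q^m}$-linear code of dimension $k$ whose length $n=n_1+\dots+n_\ell$ is partitioned into $\ell$ blocks (all $n_i>0$). Let $\mathbf{H}=(\mathbf{H}^{(1)}\mid\dots\mid\mathbf{H}^{(\ell)})\in\mathbb{F}_{q^m}^{(n-k)\times n}$, $\mathbf{H}^{(i)}\in\mathbb{F}_{q^m}^{(n-k)\times n_i}$, be a parity-check matrix of $\mathcal{C}$. Let $s\ge 1$ and let $\mathbf{E}=(\mathbf{E}^{(1)}\mid\dots\mid\mathbf{E}^{(\ell)})\in\mathbb{F}_{q^m}^{s\times n}$ with $\mathbf{E}^{(i)}\in\mathbb{F}_{q^m}^{s\times n_i}$ and $\operatorname{rk}_q(\mathbf{E}^{(i)})=t_i$ for all $i\in[1:\ell]$, so that $\mathbf{E}$ has sum-rank weight $t=\sum_{i=1}^\ell t_i$, and assume $t<n-k$. Let $\mathbf{S}=\mathbf{H}\mathbf{E}^\top\in\mathbb{F}_{q^m}^{(n-k)\times s}$ and let $\mathbf{P}\in\mathbb{F}_{q^m}^{(n-k)\times(n-k)}$ with $\operatorname{rk}_{q^m}(\mathbf{P})=n-k$ be such that $\mathbf{P}\mathbf{S}$ is in row-echelon form. Then $\mathbf{P}\mathbf{S}$ has at least $n-k-t$ zero rows. Moreover, if $\mathbf{H}_{\mathrm{sub}}$ denotes the submatrix of $\mathbf{P}\mathbf{H}$ consisting of the rows corresponding to the zero rows of $\mathbf{P}\mathbf{S}$,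 then the $\mathbb{F}_{q^m}$-row space of $\mathbf{H}_{\mathrm{sub}}$ equals $\ker_r(\mathbf{E})_{q^m}\cap\mathcal{C}^\perp$, equivalently $\ker_r(\mathbf{E})_{q^m}$ intersected with the $\mathbb{F}_{q^m}$-row space of $\mathbf{H}$.
   Context: Fix an ordered basis $\mathbf{b}=(b_1,\dots,b_m)$ of $\mathbb{F}_{q^m}$ over $\mathbb{F}_q$; for $\alpha\in\mathbb{F}_{q^m}$, $\operatorname{ext}(\alpha)\in\mathbb{F}_q^{m}$ is the column vector with $\alpha=\mathbf{b}\cdot\operatorname{ext}(\alpha)$, and $\operatorname{ext}$ is applied entrywise to vectors and matrices (an $a\times b$ matrix over $\mathbb{F}_{q^m}$ becomes an $am\times b$ matrix over $\mathbb{F}_q$). For a matrix $\mathbf{X}$ over $\mathbb{F}_{q^m}$, $\operatorname{rk}_q(\mathbf{X}):=\operatorname{rk}(\operatorname{ext}(\mathbf{X}))$ over $\mathbb{F}_q$ and $\operatorname{rk}_{q^m}$ is the usual rank over $\mathbb{F}_{q^m}$. For a vector $\mathbf{x}=(\mathbf{x}^{(1)}\mid\dots\mid\mathbf{x}^{(\ell)})$ (or matrix with column blocks) the sum-rank weight w.r.t. the partition $(n_1,\dots,n_\ell)$ is $\sum_i\operatorname{rk}_q(\mathbf{x}^{(i)})$. For a matrix $\mathbf{M}$ over $\mathbb{F}_{q^m}$ with $n$ columns, $\ker_r(\mathbf{M})_{q^m}=\{\mathbf{v}\in\mathbb{F}_{q^m}^n:\mathbf{M}\mathbf{v}^\top=\mathbf{0}\}$.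 $\mathcal{C}^\perp$ is the dual code, i.e. the $\mathbb{F}_{q^m}$-row space of $\mathbf{H}$. *)

(* Defs.v *)
From HB Require Import structures.
From mathcomp Require Import all_boot all_order all_algebra all_field.
Set Implicit Arguments. Unset Strict Implicit. Unset Printing Implicit Defensive.
Import GRing.Theory.
Local Open Scope ring_scope.

(* ext_b : expansion of a matrix over L = F_{q^m} into a matrix over F = F_q
   w.r.t. an ordered basis b = (b_1,...,b_m) of L over F.  The entry X i c
   becomes the column block (coord b 0 (X i c), ..., coord b (m-1) (X i c));
   row (i, j) of ext X is at index i * m + j (row-major [mxvec] ordering). *)
Definition ext (F : fieldType) (L : fieldExtType F) (m : nat) (b : m.-tuple L)
  (a c : nat) (X : 'M[L]_(a, c)) : 'M[F]_(a * m, c) :=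
  \matrix_(r, j) (mxvec (\matrix_(i < a, u < m) coord b u (X i j))) 0 r.

Definition rkq (F : fieldType) (L : fieldExtType F) (m : nat) (b : m.-tuple L)
  (a c : nat) (X : 'M[L]_(a, c)) : nat := \rank (ext b X).

(* position of the leading (first nonzero) entry of a row vector; n if zero *)
Definition leading (K : fieldType) (n : nat) (v : 'rV[K]_n) : nat :=
  find (fun j : 'I_n => v 0 j != 0) (enum 'I_n).

(* row-echelon form: every row below row i that is nonzero forces row i to be
   nonzero with a strictly smaller leading position (so zero rows are at the
   bottom and leading entries move strictly to the right). *)
Definition row_echelon (K : fieldType) (r n : nat) (A : 'M[K]_(r, n)) : Prop :=
  forall i j : 'I_r, (i < j)%N -> row j A != 0 ->
    (leading (row i A) < leading (row j A))%N.

Definition zero_rows (K : fieldType) (r n : nat) (A : 'M[K]_(r, n)) : {set 'I_r} :=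
  [set i | row i A == 0].

Definition rows_of (K : fieldType) (r n : nat) (Z : {set 'I_r}) (M : 'M[K]_(r, n))
  : 'M[K]_(#|Z|, n) :=
  rowsub (fun j : 'I_#|Z| => enum_val j) M.

(* Main.v *)
Require Import Defs.
From HB Require Import structures.
From mathcomp Require Import all_boot all_order all_algebra all_field.
From mathcomp Require Import zify.
Import GRing.Theory.
Local Open Scope ring_scope.
Set Implicit Arguments. Unset Strict Implicit. Unset Printing Implicit Defensive.

Section Lead.
Variable K : fieldType.

Lemma leading_lt n (v : 'rV[K]_n) : v != 0 -> (leading v < n)%N.
Proof.
move=> nz; rewrite /leading -[X in (_ < X)%N]size_enum_ord -has_find.
apply/hasP; have [j hj] : exists j, v 0 j != 0.
  apply/existsP; apply: contraR nz; rewrite negb_exists => /forallP h.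
  by apply/eqP/rowP => j; rewrite mxE; move: (h j); rewrite negbK => /eqP.
by exists j; rewrite ?mem_enum.
Qed.

Lemma nth_enumI n (j : 'I_n) (x0 : 'I_n) : nth x0 (enum 'I_n) j = j.
Proof. by apply: val_inj; rewrite /= nth_enum_ord. Qed.

Lemma leading_nz n (v : 'rV[K]_n) (j : 'I_n) : v != 0 -> nat_of_ord j = leading v -> v 0 j != 0.
Proof.
move=> nz ej.
have h := leading_lt nz.
have := @nth_find _ j (fun j : 'I_n => v 0 j != 0) (enum 'I_n).
rewrite has_find size_enum_ord -/(leading v) -ej nth_enumI; exact.
Qed.

Lemma before_leading n (v : 'rV[K]_n) (j : 'I_n) : (j < leading v)%N -> v 0 j = 0.
Proof.
move=> lt; have := @before_find _ j (fun j : 'I_n => v 0 j != 0) (enum 'I_n) j lt.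
by rewrite nth_enumI => /negbFE/eqP.
Qed.

Lemma echelon_indep r n (A : 'M[K]_(r, n)) (u : 'rV[K]_r) :
  row_echelon A -> u *m A = 0 -> forall i, row i A != 0 -> u 0 i = 0.
Proof.
move=> ech uA.
suff H : forall p i, (nat_of_ord i < p)%N -> u 0 i *: row i A = 0.
  move=> i nz; have := H i.+1 i (ltnSn _).
  by move/eqP; rewrite scaler_eq0 (negbTE nz) orbF => /eqP.
elim=> [//|p IH] i; rewrite ltnS leq_eqVlt => /orP[/eqP ei|]; last exact: IH.
have [z|nz] := eqVneq (row i A) 0; first by rewrite z scaler0.
pose c := Ordinal (leading_lt nz).
have := congr1 (fun M : 'M[K]_(1,n) => M 0 c) uA; rewrite mxE [X in X = _ -> _](bigD1 i) //= big1.
  rewrite mxE addr0 => /eqP; rewrite mulf_eq0.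
  have := leading_nz (j := c) nz erefl; rewrite mxE => /negbTE ->; rewrite orbF => /eqP ->.
  by rewrite scale0r.
move=> j nji.
have [ltji|ltij] := ltnP j i.
  have := IH j; rewrite -ei => /(_ ltji) /(congr1 (fun M : 'M[K]_(1,n) => M 0 c)).
  by rewrite !mxE => ->.
have ltij' : (i < j)%N by rewrite ltn_neqAle ltij andbT; apply: contra nji => /eqP h; apply/eqP/val_inj.
have [zj|nzj] := eqVneq (row j A) 0.
  by have := congr1 (fun M : 'M[K]_(1,n) => M 0 c) zj; rewrite !mxE => ->; rewrite mulr0.
have := ech i j ltij' nzj => lt.
have := before_leading (v := row j A) (j := c) lt; rewrite mxE => ->; by rewrite mulr0.
Qed.
End Lead.

Lemma rank_le_rkq (F : fieldType) (L : fieldExtType F) m (b : m.-tuple L)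
  (hb : basis_of fullv b) a c (X : 'M[L]_(a,c)) : (\rank X <= rkq b X)%N.
Proof.
rewrite /rkq; set Y := ext b X.
have eY := mulmx_base Y.
pose X' : 'M[L]_(a, \rank Y) :=
  \matrix_(i, j) \sum_(u < m) (col_base Y (mxvec_index i u) j) *: b`_u.
pose D : 'M[L]_(\rank Y, c) := map_mx (fun x : F => x%:A) (row_base Y).
have -> : X = X' *m D.
  apply/matrixP => i j; rewrite !mxE.
  have sp : X i j \in span b by rewrite (eqP (andP hb).1) memvf.
  rewrite {1}(coord_span sp).
  have -> : \sum_(u < m) coord b u (X i j) *: b`_u =
     \sum_(u < m) (\sum_jj col_base Y (mxvec_index i u) jj * row_base Y jj j) *: b`_u.
    apply: eq_bigr => u _; congr (_ *: _).
    have := congr1 (fun M : 'M[F]_(a * m, c) => M (mxvec_index i u) j) eY.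
    by rewrite /= !mxE mxvecE mxE => <-.
  under eq_bigr do rewrite scaler_suml.
  rewrite exchange_big /=; apply: eq_bigr => jj _.
  rewrite /X' /D !mxE mulr_suml; apply: eq_bigr => u _.
  by rewrite mulr_algr scalerA mulrC.
exact: leq_trans (mxrankM_maxr _ _) (rank_leq_row _).
Qed.

Lemma rank_mxrow_le (K : fieldType) (l : nat) (p_ : 'I_l -> nat) s
  (E : 'M[K]_(s, \sum_i p_ i)) : (\rank E <= \sum_i \rank (submxrow E i))%N.
Proof.
rewrite -mxrank_tr -{1}(submxrowK E) tr_mxrow eqmx_col.
elim/big_rec2: _ => [|i y M _ IH]; first by rewrite mxrank0.
apply: leq_trans (mxrank_adds_leqif _ _).1 _.
by rewrite genmxE mxrank_tr leq_add2l.
Qed.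
Unset Implicit Arguments.
Set Strict Implicit.
Set Printing Implicit Defensive.

Theorem lemma2
  (F : finFieldType) (L : fieldExtType F)
  (m : nat) (b : m.-tuple L) (hb : basis_of fullv b)
  (l : nat) (nb : 'I_l -> nat) (hnb : forall i, (0 < nb i)%N)
  (k : nat)
  (G : 'M[L]_(k, \sum_(i < l) nb i)) (hG : \rank G = k)
  (H : 'M[L]_(\sum_(i < l) nb i - k, \sum_(i < l) nb i))
  (hH : \rank H = (\sum_(i < l) nb i - k)%N)
  (hGH : G *m H^T = 0)
  (s : nat) (hs : (0 < s)%N)
  (E : 'M[L]_(s, \sum_(i < l) nb i))
  (t : 'I_l -> nat) (ht : forall i, rkq b (submxrow E i) = t i)
  (htlt : (\sum_(i < l) t i < \sum_(i < l) nb i - k)%N)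
  (P : 'M[L]_(\sum_(i < l) nb i - k))
  (hP : \rank P = (\sum_(i < l) nb i - k)%N)
  (hech : row_echelon (P *m (H *m E^T))) :
  (\sum_(i < l) nb i - k - \sum_(i < l) t i <= #|zero_rows (P *m (H *m E^T))|)%N /\
  (rows_of (zero_rows (P *m (H *m E^T))) (P *m H) ==
     kermx E^T :&: kermx G^T)%MS /\
  (rows_of (zero_rows (P *m (H *m E^T))) (P *m H) == kermx E^T :&: H)%MS.
Proof.
set M := P *m H.
set A := P *m (H *m E^T).
have eA : A = M *m E^T by rewrite /A /M mulmxA.
have Hfree : row_free H by rewrite /row_free hH.
have rM : \rank M = (\sum_(i < l) nb i - k)%N by rewrite /M mxrankMfree // hP.
have Mfree : row_free M by rewrite /row_free rM.
have eMH : (M == H)%MS by rewrite -(mxrank_leqif_eq (submxMl P H)).2 rM hH.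
have eHK : (H == kermx G^T)%MS.
  have sHK : (H <= kermx G^T)%MS by apply/sub_kermxP; rewrite -[H]trmxK -trmx_mul hGH trmx0.
  by rewrite -(mxrank_leqif_eq sHK).2 mxrank_ker mxrank_tr hG hH.
set Z := zero_rows A.
set R := rows_of Z M.
have RsubK : (R <= kermx E^T)%MS.
  apply/row_subP => j; rewrite row_rowsub sub_kermx -row_mul -eA.
  by have := enum_valP j; rewrite inE.
have RsubH : (R <= H)%MS by apply: submx_trans (rowsub_sub _ _) (submxMl _ _).
have capsubR : (kermx E^T :&: H <= R)%MS.
  apply/rV_subP => x; rewrite sub_capmx => /andP[xK xH].
  have : (x <= M)%MS by apply: submx_trans xH _; case/andP: eMH.
  case/submxP => u ex.
  move: xK; rewrite sub_kermx ex => /eqP xK.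
  have uA : u *m A = 0 by rewrite eA mulmxA.
  have := echelon_indep hech uA => hu.
  rewrite mulmx_sum_row summx_sub // => i _.
  have [iZ|iZ] := boolP (i \in Z).
    apply: scalemx_sub; apply: (eq_row_sub (enum_rank_in iZ i)).
    by rewrite row_rowsub enum_rankK_in.
  by rewrite hu ?scale0r ?sub0mx //; move: iZ; rewrite inE.
have e3 : (R == kermx E^T :&: H)%MS by apply/andP; rewrite sub_capmx RsubK RsubH.
split; last split => //.
  have Rfree : row_free R.
    apply: inj_row_free => v.
    rewrite /R /rows_of rowsubE mulmxA => /eqP; rewrite mulmx_free_eq0 // => /eqP h.
    apply/rowP => j; have := congr1 (fun W : 'M[L]_(1, \sum_(i < l) nb i - k) => W 0 (enum_val j)) h.
    have rs : forall i (c : 'I_(\sum_(i < l) nb i - k)), (rowsub (fun j0 : 'I_#|Z| => enum_val j0) 1%:M : 'M[L]_(#|Z|, \sum_(i < l) nb i - k)) i c = (enum_val i == c)%:R.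
      by move=> i c; rewrite mxE mxE.
    rewrite mxE (bigD1 j) //= [X in _ + X]big1 ?addr0.
      by rewrite rs eqxx mulr1 => ->; rewrite !mxE.
    move=> i ij; rewrite rs.
    have -> : (enum_val i == enum_val j) = false.
      by apply/negbTE; apply: contra ij => /eqP /enum_val_inj ->.
    by rewrite mulr0.
  have rR : \rank R = #|Z| by apply/eqP.
  have rE : (\rank E <= \sum_(i < l) t i)%N.
    apply: leq_trans (rank_mxrow_le E) _.
    by apply: leq_sum => i _; rewrite -ht; apply: rank_le_rkq.
  have := mxrank_sum_cap (kermx E^T) H.
  rewrite -(eqmx_rank e3) rR mxrank_ker mxrank_tr hH.
  have := rank_leq_col (kermx E^T + H)%MS.
  have := rank_leq_col E.
  move: rE; generalize (\rank E) (\rank (kermx E^T + H)%MS) (\sum_(i < l) t i) (\sum_(i < l) nb i) #|Z|.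
  move=> x1 x2 x3 x4 x5; clear; lia.
apply/andP; split.
  by rewrite sub_capmx RsubK (submx_trans RsubH) //; case/andP: eHK.
apply: submx_trans capsubR.
rewrite sub_capmx capmxSl /=; apply: submx_trans (capmxSr _ _) _.
by case/andP: eHK.
Qed.
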